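(* Let $k$ be a positive integer and let $D$ be a connected digraph (i.e., its underlying undirected graph is connected) of order $n\ge\max\{k,2\}$. Then $\gamma_{rk}(D)\le\gamma_{trk}(D)\le 2\gamma_{rk}(D)-k+1$, and both bounds are sharp (attained by some such digraphs).
   Context: All digraphs are finite, with no loops or multiple arcs (pairs of opposite arcs are allowed). $N^-(v)$ denotes the set of in-neighbors of $v$. A vertex is isolated if it has no in-neighbor and no out-neighbor. For a positive integer $k$, a $k$-rainbow dominating function ($k$RDF) on $D$ is a function $f:V(D)\to\mathcal P(\{1,\dots,k\})$ such that every $v$ with $f(v)=\emptyset$ satisfies $\bigcup_{u\in N^-(v)}f(u)=\{1,\dots,k\}$; its weight is $\omega(f)=\sum_v|f(v)|$; $\gamma_{rk}(D)$ is the minimum weight of a $k$RDF on $D$. If $D$ has no isolated vertex, a total $k$RDF (T$k$RDF) is a $k$RDF $f$ such that the subdigraph induced by $\{v:f(v)\ne\emptyset\}$ has no isolated vertex; $\gamma_{trk}(D)$ is the minimum weight of a T$k$RDF. *)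

(* Defs.v *)
From mathcomp Require Import all_boot.
Set Implicit Arguments. Unset Strict Implicit. Unset Printing Implicit Defensive.

(* A digraph on a finite vertex type V is given by its arc relation
   [arc u v] = "there is an arc u -> v".  No loops = irreflexive. *)
Definition loopless (V : finType) (arc : rel V) : Prop := forall v, ~~ arc v v.

Definition uadj (V : finType) (arc : rel V) : rel V :=
  fun u v => arc u v || arc v u.

Definition dconnected (V : finType) (arc : rel V) : Prop :=
  forall u v : V, connect (uadj arc) u v.

Definition isolated (V : finType) (arc : rel V) (v : V) : bool :=
  [forall u, ~~ uadj arc u v].

Definition is_kRDF (V : finType) (arc : rel V) (k : nat)
    (f : {ffun V -> {set 'I_k}}) : bool :=
  [forall v, (f v == set0) ==>
     (\bigcup_(u | arc u v) f u == [set: 'I_k])].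

Definition weight (V : finType) (k : nat) (f : {ffun V -> {set 'I_k}}) : nat :=
  \sum_(v : V) #|f v|.

(* total kRDF: the subdigraph induced by {v : f v <> set0} has no isolated
   vertex *)
Definition is_TkRDF (V : finType) (arc : rel V) (k : nat)
    (f : {ffun V -> {set 'I_k}}) : bool :=
  is_kRDF arc f &&
  [forall v, (f v != set0) ==>
     [exists u, (f u != set0) && uadj arc u v]].

(* the all-full function has weight #|V| * k and is a kRDF (and a TkRDF when
   there is no isolated vertex), so it is a safe default for the minimum *)
Definition gamma_rk (V : finType) (arc : rel V) (k : nat) : nat :=
  \big[minn/(#|V| * k)%N]_(f : {ffun V -> {set 'I_k}} | is_kRDF arc f) weight f.

Definition gamma_trk (V : finType) (arc : rel V) (k : nat) : nat :=
  \big[minn/(#|V| * k)%N]_(f : {ffun V -> {set 'I_k}} | is_TkRDF arc f) weight f.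

(* Main.v *)
Require Import Defs.
From mathcomp Require Import all_boot zify.
Set Implicit Arguments. Unset Strict Implicit. Unset Printing Implicit Defensive.

Lemma bigmin_le_idx (I : finType) (P : pred I) (F : I -> nat) m :
  \big[minn/m]_(i | P i) F i <= m.
Proof.
apply: (big_rec (fun x => x <= m)) => // i x _ Hx.
exact: leq_trans (geq_minr _ _) Hx.
Qed.

Lemma bigmin_le (I : finType) (P : pred I) (F : I -> nat) m j :
  P j -> \big[minn/m]_(i | P i) F i <= F j.
Proof.
move=> Pj.
have: j \in index_enum I by rewrite mem_index_enum.
elim: (index_enum I) => // a r IH; rewrite inE big_cons => /orP[/eqP<-|jr].
  by rewrite Pj geq_minl.
case: (P a) => /=; last exact: IH.
apply: leq_trans (geq_minr _ _) _; exact: IH.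
Qed.

Lemma bigmin_ge (I : finType) (P : pred I) (F : I -> nat) m L :
  L <= m -> (forall i, P i -> L <= F i) -> L <= \big[minn/m]_(i | P i) F i.
Proof.
move=> Hm HF; apply: (big_rec (fun x => L <= x)) => // i x Pi Hx.
by rewrite leq_min Hx HF.
Qed.

Lemma card_bigcup_le (V : finType) (k : nat) (P : pred V) (F : V -> {set 'I_k}) :
  #|\bigcup_(u | P u) F u| <= \sum_(u | P u) #|F u|.
Proof.
apply: (big_ind2 (fun (A : {set 'I_k}) n => #|A| <= n)) => //.
  by rewrite cards0.
move=> A a B b HA HB; apply: leq_trans (leq_card_setU A B).1 _.
exact: leq_add.
Qed.

Lemma sum_sub_le (V : finType) (P : pred V) (F : V -> nat) :
  \sum_(u | P u) F u <= \sum_u F u.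
Proof.
rewrite big_mkcond; apply: leq_sum => i _; by case: (P i).
Qed.

Lemma weight_ge_card (V : finType) (k : nat) (f : {ffun V -> {set 'I_k}}) :
  (forall v, f v != set0) -> #|V| <= weight f.
Proof.
move=> H; rewrite /weight -sum1_card; apply: leq_sum => i _.
by rewrite card_gt0.
Qed.

Lemma weight_ge_pair (V : finType) (k : nat) (f : {ffun V -> {set 'I_k}}) x y :
  x != y -> #|f x| + #|f y| <= weight f.
Proof.
move=> Hxy; rewrite /weight (bigD1 x) //= (bigD1 y) /=; last by rewrite eq_sym Hxy.
by rewrite addnA leq_addr.
Qed.

Lemma kRDF_ge_k (V : finType) (arc : rel V) (k : nat) (f : {ffun V -> {set 'I_k}}) :
  is_kRDF arc f -> k <= #|V| -> k <= weight f.
Proof.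
move=> /forallP Hf Hk.
case: (pickP (fun v => f v == set0)) => [w Hw | Hne].
  move: (Hf w); rewrite Hw /= => /eqP HU.
  apply: (@leq_trans #|\bigcup_(u | arc u w) f u|); first by rewrite HU cardsT card_ord.
  apply: leq_trans (card_bigcup_le _ _) _; exact: sum_sub_le.
apply: leq_trans Hk _; apply: weight_ge_card => v; by rewrite Hne.
Qed.

Lemma has_nbr (V : finType) (arc : rel V) :
  dconnected arc -> 1 < #|V| -> forall x, exists u, uadj arc u x.
Proof.
move=> Hc Hn x.
case: (pickP (predC1 x)) => [y Hy | H0]; last first.
  have := eq_card0 H0; rewrite cardC1; lia.
move/connectP: (Hc x y) => [[|z p] /= Hp Hl].
  by move: Hy; rewrite /= Hl eqxx.
move/andP: Hp => [Hxz _]; exists z; by rewrite /uadj orbC.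
Qed.


Lemma upper (V : finType) (arc : rel V) (k : nat) (f : {ffun V -> {set 'I_k}}) :
  0 < k -> dconnected arc -> 1 < #|V| -> k <= #|V| -> is_kRDF arc f ->
  gamma_trk arc k + k <= 2 * weight f + 1.
Proof.
move=> Hk Hc Hn HkV Hf.
have Hwk := kRDF_ge_k Hf HkV.
have Hnb := has_nbr Hc Hn.
case: (pickP (fun v => f v == set0)) => [w Hw | Hne]; last first.
  have : gamma_trk arc k <= weight f.
    apply: bigmin_le; rewrite /is_TkRDF Hf /=; apply/forallP => v; apply/implyP => _.
    have [u Hu] := Hnb v; apply/existsP; exists u; by rewrite Hu Hne.
  lia.
pose i0 : 'I_k := Ordinal Hk.
pose nonisol x := [exists u, (f u != set0) && uadj arc u x].
pose I' := [set x | (f x != set0) && ~~ nonisol x && ~~ arc x w].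
pose p := fun x => odflt x [pick u | uadj arc u x].
have Hp : forall x, uadj arc (p x) x.
  move=> x; rewrite /p; case: pickP => [u Hu | H] //=.
  have [u Hu] := Hnb x; by rewrite H in Hu.
pose T := w |: (p @: I').
pose g := [ffun v => if v \in T then f v :|: [set i0] else f v].
have fsub : forall v, f v \subset g v.
  move=> v; rewrite /g ffunE; case: ifP => _; [exact: subsetUl | exact: subxx].
have gne : forall v, f v != set0 -> g v != set0.
  move=> v; apply: contra => /eqP Hg; by rewrite -subset0 -Hg fsub.
have gT : forall v, v \in T -> g v != set0.
  move=> v Hv; apply/set0Pn; exists i0; by rewrite /g ffunE Hv in_setU set11 orbT.
have HfU := Hf; move/forallP: HfU => HfU.
have Hgk : is_kRDF arc g.
  apply/forallP => v; apply/implyP => Hgv.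
  have Hfv : f v == set0 by rewrite -subset0 -(eqP Hgv) fsub.
  move: (HfU v); rewrite Hfv /= => /eqP HU.
  apply/eqP/setP => c; rewrite inE.
  have: c \in \bigcup_(u | arc u v) f u by rewrite HU inE.
  case/bigcupP => u Hu Hc'; apply/bigcupP; exists u => //.
  exact: (subsetP (fsub u)).
have Hgt : is_TkRDF arc g.
  rewrite /is_TkRDF Hgk /=; apply/forallP => v; apply/implyP => Hgv.
  case: (boolP (v \in T)) => HvT.
    move: HvT; rewrite in_setU1 => /orP[/eqP -> | /imsetP [x Hx ->]].
      move: (HfU w); rewrite Hw /= => /eqP HU.
      have: i0 \in \bigcup_(u | arc u w) f u by rewrite HU inE.
      case/bigcupP => u Hu Hi; apply/existsP; exists u.
      rewrite /uadj Hu /= andbT; apply: gne; apply/set0Pn; by exists i0.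
    move: Hx; rewrite inE => /andP [/andP [Hfx _] _].
    apply/existsP; exists x; rewrite gne //=.
    by move: (Hp x); rewrite /uadj orbC.
  have Hfv : f v != set0 by move: Hgv; rewrite /g ffunE (negbTE HvT).
  case: (boolP (nonisol v)) => Hni.
    case/existsP: Hni => u /andP [Hu Hau]; apply/existsP; exists u; by rewrite gne.
  case: (boolP (arc v w)) => Hvw.
    apply/existsP; exists w; rewrite gT ?setU11 //=; by rewrite /uadj Hvw orbT.
  have HvI : v \in I' by rewrite inE Hfv Hni Hvw.
  apply/existsP; exists (p v); rewrite gT ?Hp //.
  by rewrite in_setU1 (imset_f p HvI) orbT.
have Hg1 : gamma_trk arc k <= weight g by apply: bigmin_le.
have Hg2 : weight g <= weight f + #|T|.
  have -> : #|T| = \sum_v (v \in T : nat).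
    by rewrite -sum1_card big_mkcond /=; apply: eq_bigr => v _; case: (v \in T).
  rewrite /weight -big_split /=; apply: leq_sum => v _.
  rewrite /g ffunE; case: ifP => _; last by rewrite addn0.
  by rewrite (leq_trans (leq_card_setU _ _).1) // cards1.
have Hg3 : #|T| <= 1 + #|I'|.
  rewrite cardsU1 leq_add ?leq_b1 //; exact: leq_imset_card.
have Hg4 : #|I'| + k <= weight f.
  rewrite /weight (bigID (fun x => arc x w)) /= addnC; apply: leq_add.
    move: (HfU w); rewrite Hw /= => /eqP HU.
    apply: (@leq_trans #|\bigcup_(u | arc u w) f u|); first by rewrite HU cardsT card_ord.
    exact: card_bigcup_le.
  rewrite -sum1_card big_mkcond [X in _ <= X]big_mkcond /=; apply: leq_sum => x _.
  rewrite inE; case: (boolP (f x != set0)) => Hfx //=.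
  case: (arc x w); rewrite /= ?andbF ?andbT //; case: (nonisol x) => //=.
  by rewrite card_gt0.
lia.
Qed.


Lemma part_a (k : nat) (V : finType) (arc : rel V) :
  0 < k -> loopless arc -> dconnected arc -> maxn k 2 <= #|V| ->
  gamma_rk arc k <= gamma_trk arc k /\
  gamma_trk arc k <= 2 * gamma_rk arc k - k + 1.
Proof.
move=> Hk _ Hc Hn.
have Hn2 : 1 < #|V| by move: Hn; rewrite geq_max => /andP[].
have HkV : k <= #|V| by move: Hn; rewrite geq_max => /andP[].
have Hidx : k <= #|V| * k by rewrite leq_pmull //; lia.
split.
  apply: bigmin_ge; first exact: bigmin_le_idx.
  move=> f /andP [Hf _]; exact: bigmin_le.
suff: gamma_trk arc k + k <= 2 * gamma_rk arc k + 1 by lia.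
apply: (big_rec (fun x => gamma_trk arc k + k <= 2 * x + 1)).
  have H1 : gamma_trk arc k <= #|V| * k by apply: bigmin_le_idx.
  lia.
move=> f x Hf Hx; rewrite /minn; case: ifP => _ //.
exact: upper.
Qed.

Lemma grk_eq (V : finType) (arc : rel V) (k L : nat) (f : {ffun V -> {set 'I_k}}) :
  L <= #|V| * k -> is_kRDF arc f -> weight f <= L ->
  (forall h : {ffun V -> {set 'I_k}}, is_kRDF arc h -> L <= weight h) -> gamma_rk arc k = L.
Proof.
move=> HL Hf Hw Hh; apply/eqP; rewrite eqn_leq; apply/andP; split.
  apply: leq_trans _ Hw; exact: bigmin_le.
exact: bigmin_ge.
Qed.

Lemma gtrk_eq (V : finType) (arc : rel V) (k L : nat) (f : {ffun V -> {set 'I_k}}) :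
  L <= #|V| * k -> is_TkRDF arc f -> weight f <= L ->
  (forall h : {ffun V -> {set 'I_k}}, is_TkRDF arc h -> L <= weight h) -> gamma_trk arc k = L.
Proof.
move=> HL Hf Hw Hh; apply/eqP; rewrite eqn_leq; apply/andP; split.
  apply: leq_trans _ Hw; exact: bigmin_le.
exact: bigmin_ge.
Qed.

Lemma conn_root (V : finType) (arc : rel V) r :
  (forall v, v != r -> uadj arc r v) -> dconnected arc.
Proof.
move=> H u v; apply: (@connect_trans _ _ r).
  case: (eqVneq u r) => [->|Hu]; first exact: connect0.
  apply: connect1; move: (H u Hu); by rewrite /uadj orbC.
case: (eqVneq v r) => [->|Hv]; first exact: connect0.
exact: connect1 (H v Hv).
Qed.

Lemma lb2 (V : finType) (arc : rel V) (k : nat) (h : {ffun V -> {set 'I_k}}) :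
  0 < k -> is_kRDF arc h -> 1 < #|V| ->
  (forall x, exists v, (v != x) && ~~ arc x v) -> 2 <= weight h.
Proof.
move=> Hk /forallP Hh Hn Hx.
pose i0 : 'I_k := Ordinal Hk.
have cov : forall z, h z == set0 -> exists2 u, arc u z & h u != set0.
  move=> z Hz; move: (Hh z); rewrite Hz /= => /eqP HU.
  have: i0 \in \bigcup_(u | arc u z) h u by rewrite HU inE.
  case/bigcupP => u Hu Hi; exists u => //; apply/set0Pn; by exists i0.
have pair : forall x y, x != y -> h x != set0 -> h y != set0 -> 2 <= weight h.
  move=> x y Hxy Hx' Hy'; apply: leq_trans (weight_ge_pair h Hxy).
  rewrite -!card_gt0 in Hx' Hy'; lia.
case: (pickP (fun v => h v == set0)) => [z Hz | Hne]; last first.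
  apply: leq_trans Hn _; apply: weight_ge_card => v; by rewrite Hne.
have [x Hxz Hx0] := cov z Hz.
have [v /andP [Hvx Hxv]] := Hx x.
case: (boolP (h v == set0)) => Hv0; last exact: pair v x Hvx Hv0 Hx0.
have [u Huv Hu0] := cov v Hv0.
apply: (pair u x) => //; apply: contraNneq Hxv => <-; exact: Huv.
Qed.


(* star example: gamma_trk = gamma_rk + 1 = 2 gamma_rk - k + 1 *)
Lemma star_ex (k : nat) : 0 < k ->
  exists (V : finType) (arc : rel V),
    [/\ loopless arc, dconnected arc, maxn k 2 <= #|V| &
        gamma_trk arc k = 2 * gamma_rk arc k - k + 1].
Proof.
move=> Hk.
pose a : 'I_k.+1 := ord0.
have H1 : 1 < k.+1 by [].
pose b : 'I_k.+1 := Ordinal H1.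
pose i0 : 'I_k := Ordinal Hk.
have ba : b != a by [].
pose arc : rel 'I_k.+1 := fun u v => (u == a) && (v != a).
have Hcard : #|'I_k.+1| = k.+1 by rewrite card_ord.
have Hstar : forall (h : {ffun 'I_k.+1 -> {set 'I_k}}) z, z != a ->
    \bigcup_(u | arc u z) h u \subset h a.
  move=> h z Hz; apply/bigcupsP => u /andP [/eqP -> _]; exact: subxx.
exists 'I_k.+1, arc; split.
- by move=> v; rewrite /arc; case: (v == a).
- apply: (@conn_root _ _ a) => v Hv; by rewrite /uadj /arc eqxx Hv.
- rewrite Hcard geq_max; apply/andP; split; lia.
pose f : {ffun 'I_k.+1 -> {set 'I_k}} := [ffun v => if v == a then setT else set0].
have HfR : is_kRDF arc f.
  apply/forallP => v; apply/implyP; rewrite /f ffunE.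
  case: (eqVneq v a) => [-> |Hv]; rewrite ?eqxx; first by move=> /eqP/setP/(_ i0); rewrite !inE.
  move=> _; rewrite eqEsubset subsetT /=; apply/subsetP => c _.
  apply/bigcupP; exists a; first by rewrite /arc eqxx Hv.
  by rewrite ffunE eqxx inE.
have Hwf : weight f = k.
  rewrite /weight (bigD1 a) //= big1 => [|v Hv]; first by rewrite ffunE eqxx cardsT card_ord addn0.
  by rewrite ffunE (negbTE Hv) cards0.
have Hrk : gamma_rk arc k = k.
  apply: (grk_eq (f := f)) => //; first by rewrite Hcard; lia.
    by rewrite Hwf.
  by move=> h Hh; apply: kRDF_ge_k Hh _; rewrite Hcard.
pose g : {ffun 'I_k.+1 -> {set 'I_k}} :=
  [ffun v => if v == a then setT else if v == b then [set i0] else set0].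
have Hgk : is_kRDF arc g.
  apply/forallP => v; apply/implyP; rewrite /g ffunE.
  case: (eqVneq v a) => [-> |Hv]; rewrite ?eqxx; first by move=> /eqP/setP/(_ i0); rewrite !inE.
  move=> _; rewrite eqEsubset subsetT /=; apply/subsetP => c _.
  apply/bigcupP; exists a; first by rewrite /arc eqxx Hv.
  by rewrite ffunE eqxx inE.
have Hgt : is_TkRDF arc g.
  rewrite /is_TkRDF Hgk /=; apply/forallP => v; apply/implyP; rewrite /g ffunE.
  case: (eqVneq v a) => [-> |Hv] _.
    apply/existsP; exists b; rewrite ffunE (negbTE ba) eqxx /=.
    apply/andP; split; first by apply/set0Pn; exists i0; rewrite inE.
    by rewrite /uadj /arc eqxx.
  apply/existsP; exists a; rewrite ffunE eqxx /=.
  apply/andP; split; first by apply/set0Pn; exists i0; rewrite inE.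
  by rewrite /uadj /arc eqxx Hv.
have Hwg : weight g = k.+1.
  rewrite /weight (bigD1 a) //= (bigD1 b) //= big1 => [|v /andP [Hva Hvb]].
    by rewrite !ffunE eqxx (negbTE ba) eqxx cardsT card_ord cards1 addn0 addn1.
  by rewrite ffunE (negbTE Hva) (negbTE Hvb) cards0.
have Htrk : gamma_trk arc k = k.+1.
  apply: (gtrk_eq (f := g)) => //; first by rewrite Hcard; nia.
    by rewrite Hwg.
  move=> h /andP [/forallP Hh /forallP Ht].
  case: (pickP (fun v => h v == set0)) => [z Hz | Hne]; last first.
    apply: (@leq_trans #|'I_k.+1|); first by rewrite Hcard.
    apply: weight_ge_card => v; by rewrite Hne.
  move: (Hh z); rewrite Hz /= => /eqP HU.
  case: (eqVneq z a) => [Hza | Hza].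
    move: HU; rewrite big_pred0 => [|u]; last by rewrite /arc Hza eqxx andbF.
    move/setP/(_ i0); by rewrite !inE.
  have Ha : h a = setT.
    by apply/eqP; rewrite eqEsubset subsetT /= -HU Hstar.
  have Ha0 : h a != set0 by apply/set0Pn; exists i0; rewrite Ha inE.
  move: (Ht a); rewrite Ha0 /= => /existsP [u /andP [Hu0 Hua]].
  have Hu : a != u.
    apply: contraTneq Hua => <-; by rewrite /uadj /arc eqxx.
  apply: leq_trans (weight_ge_pair h Hu).
  by rewrite Ha cardsT card_ord -[X in X <= _]addn1 leq_add2l card_gt0.
rewrite Htrk Hrk; lia.
Qed.


Lemma eqA_ex (k : nat) : 1 < k ->
  exists (V : finType) (arc : rel V),
    [/\ loopless arc, dconnected arc, maxn k 2 <= #|V| &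
        gamma_trk arc k = gamma_rk arc k].
Proof.
move=> Hk.
have Hk0 : 0 < k by lia.
pose a : 'I_k.+1 := ord0.
have H1 : 1 < k.+1 by lia.
pose b : 'I_k.+1 := Ordinal H1.
pose i0 : 'I_k := Ordinal Hk0.
pose i1 : 'I_k := Ordinal Hk.
have ba : b != a by [].
pose arc : rel 'I_k.+1 := fun u v => (val u < 2) && (u != v).
have Hcard : #|'I_k.+1| = k.+1 by rewrite card_ord.
exists 'I_k.+1, arc; split.
- by move=> v; rewrite /arc eqxx andbF.
- apply: (@conn_root _ _ a) => v Hv; by rewrite /uadj /arc eq_sym Hv.
- rewrite Hcard geq_max; apply/andP; split; lia.
pose f : {ffun 'I_k.+1 -> {set 'I_k}} :=
  [ffun v => if v == a then [set i0] else if v == b then [set~ i0] else set0].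
have fa : f a != set0 by apply/set0Pn; exists i0; rewrite /f ffunE eqxx inE.
have fb : f b != set0.
  by apply/set0Pn; exists i1; rewrite /f ffunE (negbTE ba) eqxx !inE.
have Hfk : is_kRDF arc f.
  apply/forallP => v; apply/implyP => Hv.
  have Hva : v != a by apply: contraNneq fa => <-.
  have Hvb : v != b by apply: contraNneq fb => <-.
  rewrite eqEsubset subsetT /=; apply/subsetP => c _.
  case: (eqVneq c i0) => [->|Hc].
    apply/bigcupP; exists a; first by rewrite /arc eq_sym Hva.
    by rewrite /f ffunE eqxx inE.
  apply/bigcupP; exists b; first by rewrite /arc eq_sym Hvb.
  by rewrite /f ffunE (negbTE ba) eqxx !inE Hc.
have Hft : is_TkRDF arc f.
  rewrite /is_TkRDF Hfk /=; apply/forallP => v; apply/implyP => Hv.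
  case: (eqVneq v a) => [->|Hva].
    by apply/existsP; exists b; rewrite fb /uadj /arc.
  case: (eqVneq v b) => [->|Hvb].
    by apply/existsP; exists a; rewrite fa /uadj /arc.
  by move: Hv; rewrite /f ffunE (negbTE Hva) (negbTE Hvb) eqxx.
have Hwf : weight f = k.
  rewrite /weight (bigD1 a) //= (bigD1 b) //= big1 => [|v /andP [Hva Hvb]].
    rewrite !ffunE eqxx (negbTE ba) eqxx cards1 cardsC1 card_ord addn0; lia.
  by rewrite ffunE (negbTE Hva) (negbTE Hvb) cards0.
have HL : k <= #|'I_k.+1| * k by rewrite Hcard; nia.
have Hlb : forall h : {ffun 'I_k.+1 -> {set 'I_k}}, is_kRDF arc h -> k <= weight h.
  by move=> h Hh; apply: kRDF_ge_k Hh _; rewrite Hcard.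
rewrite (grk_eq HL Hfk) ?Hwf // (gtrk_eq HL Hft) ?Hwf //.
by move=> h /andP [Hh _]; exact: Hlb.
Qed.

Lemma eqC3_ex :
  exists (V : finType) (arc : rel V),
    [/\ loopless arc, dconnected arc, maxn 1 2 <= #|V| &
        gamma_trk arc 1 = gamma_rk arc 1].
Proof.
pose arc : rel 'I_3 := fun u v =>
  (val v == (val u).+1) || ((val u == 2) && (val v == 0)).
have Hcard : #|'I_3| = 3 by rewrite card_ord.
pose a : 'I_3 := ord0.
pose b : 'I_3 := Ordinal (isT : 1 < 3).
pose c : 'I_3 := Ordinal (isT : 2 < 3).
pose i0 : 'I_1 := ord0.
exists 'I_3, arc; split.
- by move=> [[|[|[|?]]] ?].
- apply: (@conn_root _ _ a) => -[[|[|[|?]]] ?] //= _.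
- by rewrite Hcard.
pose f : {ffun 'I_3 -> {set 'I_1}} := [ffun v => if val v < 2 then setT else set0].
have fne : forall v : 'I_3, val v < 2 -> f v != set0.
  move=> v Hv; apply/set0Pn; exists i0; by rewrite ffunE Hv inE.
have Hfk : is_kRDF arc f.
  apply/forallP => v; apply/implyP; rewrite ffunE.
  case: v => -[|[|[|?]]] Hv //=.
  - move/eqP/setP/(_ i0); by rewrite !inE.
  - move/eqP/setP/(_ i0); by rewrite !inE.
  - move=> _; apply/eqP/setP => x; rewrite inE; apply/bigcupP; exists b => //.
    by rewrite ffunE inE.
have Hft : is_TkRDF arc f.
  rewrite /is_TkRDF Hfk /=; apply/forallP => v; apply/implyP => Hv0.
  case: v Hv0 => -[|[|[|?]]] Hv Hv0 //=.
  - apply/existsP; exists b; by rewrite fne.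
  - apply/existsP; exists a; by rewrite fne.
  - by move: Hv0; rewrite ffunE /= eqxx.
have Hwf : weight f = 2.
  by rewrite /weight !big_ord_recl big_ord0 !ffunE /= cardsT card_ord cards0.
have HL : 2 <= #|'I_3| * 1 by rewrite Hcard.
have Hlb : forall h : {ffun 'I_3 -> {set 'I_1}}, is_kRDF arc h -> 2 <= weight h.
  move=> h Hh; apply: lb2 Hh _ _ => //; first by rewrite Hcard.
  move=> -[[|[|[|?]]] Hx].
  - by exists c.
  - by exists a.
  - by exists b.
  - by [].
rewrite (grk_eq HL Hfk) ?Hwf // (gtrk_eq HL Hft) ?Hwf //.
by move=> h /andP [Hh _]; exact: Hlb.
Qed.

Theorem theorem2p3 :
  (forall (k : nat) (V : finType) (arc : rel V),
     0 < k -> loopless arc -> dconnected arc -> maxn k 2 <= #|V| ->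
     gamma_rk arc k <= gamma_trk arc k /\
     gamma_trk arc k <= 2 * gamma_rk arc k - k + 1)
  /\
  (forall k : nat, 0 < k ->
     (exists (V : finType) (arc : rel V),
        [/\ loopless arc, dconnected arc, maxn k 2 <= #|V| &
            gamma_trk arc k = gamma_rk arc k])
     /\
     (exists (V : finType) (arc : rel V),
        [/\ loopless arc, dconnected arc, maxn k 2 <= #|V| &
            gamma_trk arc k = 2 * gamma_rk arc k - k + 1])).
Proof.
split; first exact: part_a.
move=> k Hk; split; last exact: star_ex.
case: (ltnP 1 k) => Hk1; first exact: eqA_ex.
have -> : k = 1 by lia.
exact: eqC3_ex.
Qed.
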